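(* Let $p>3$ be a prime, $q=p^h$, and $a,b\in\mathbb{F}_{q^2}^*$. Suppose that $f_{a,b}(X)=X(1+aX^{q(q-1)}+bX^{2(q-1)})$ is a permutation polynomial of $\mathbb{F}_{q^2}$, that $N_{a,b}(X)$ and $D_{a,b}(X)$ have no nonconstant common factor, and that there exist $A,B,C\in\overline{\mathbb{F}_q}$ such that $$F_{a,b}(X,Y)=-b(XY+AX+BY+C)(XY+BX+AY+C).$$ Then $b=-a^{q-1}/3$ and $3a^{q+1}(4-9a^{q+1})\in\square_q^*$.
   Context: A polynomial $f\in\mathbb{F}_{q^2}[X]$ is a permutation polynomial of $\mathbb{F}_{q^2}$ if $x\mapsto f(x)$ is a bijection of $\mathbb{F}_{q^2}$. $N_{a,b}(X)=a^qX^3+X^2+b^q$, $D_{a,b}(X)=bX^3+X+a$, and $$F_{a,b}(X,Y)=\frac{N_{a,b}(X)D_{a,b}(Y)-N_{a,b}(Y)D_{a,b}(X)}{X-Y}\in\mathbb{F}_{q^2}[X,Y].$$ $\square_q^*$ denotes the set of nonzero squares of $\mathbb{F}_q$. *)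

(* Defs.v *)
From HB Require Import structures.
From mathcomp Require Import all_boot all_order all_algebra all_field.
Set Implicit Arguments. Unset Strict Implicit. Unset Printing Implicit Defensive.
Import GRing.Theory.
Local Open Scope ring_scope.

Definition is_perm_poly (F : fieldType) (f : {poly F}) : Prop :=
  bijective (fun x : F => f.[x]).

Definition fab (F : fieldType) (q : nat) (a b : F) : {poly F} :=
  'X * (1 + a *: 'X^(q * (q - 1)) + b *: 'X^(2 * (q - 1))).

Definition Nab (F : fieldType) (q : nat) (a b : F) : {poly F} :=
  (a ^+ q) *: 'X^3 + 'X^2 + (b ^+ q)%:P.

Definition Dab (F : fieldType) (a b : F) : {poly F} :=
  b *: 'X^3 + 'X + a%:P.

(* Bivariate polynomials are {poly {poly K}}: the inner variable is X
   (a polynomial p(X) is embedded as p%:P), the outer variable is Y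
   (p(Y) is embedded as p^:P = map_poly polyC p). *)
Definition bivX (K : fieldType) (p : {poly K}) : {poly {poly K}} := p%:P.
Definition bivY (K : fieldType) (p : {poly K}) : {poly {poly K}} := map_poly polyC p.

(* F(X,Y) = (N(X) D(Y) - N(Y) D(X)) / (X - Y); the division is exact. *)
Definition Fbiv (K : fieldType) (N D : {poly K}) : {poly {poly K}} :=
  (bivX N * bivY D - bivY N * bivX D) %/ (bivX 'X - bivY 'X).

Definition nonzero_square_Fq (F : fieldType) (q : nat) (x : F) : Prop :=
  exists y : F, [/\ y ^+ q = y, y != 0 & y ^+ 2 = x].

(* Main.v *)
Require Import Defs.
From HB Require Import structures.
From mathcomp Require Import all_boot all_order all_algebra all_field.
From mathcomp Require Import ring zify.
Import GRing.Theory.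
Local Open Scope ring_scope.

Lemma frobD (R : comNzRingType) (p h : nat) (x y : R) :
  prime p -> p \in [pchar R] -> (x + y) ^+ (p ^ h) = x ^+ (p ^ h) + y ^+ (p ^ h).
Proof.
move=> pp pc; apply: exprDn_pchar.
by rewrite pnatX (pnatE _ pp) pc.
Qed.

Lemma frobN (R : comNzRingType) (p h : nat) (x : R) :
  prime p -> p \in [pchar R] -> (- x) ^+ (p ^ h) = - x ^+ (p ^ h).
Proof.
move=> pp pc; apply/eqP; rewrite -subr_eq0 opprK -frobD // addNr.
by rewrite expr0n expn_eq0 eqn0Ngt (prime_gt0 pp).
Qed.

Lemma frobnat (R : comNzRingType) (p h n : nat) :
  prime p -> p \in [pchar R] -> (n%:R : R) ^+ (p ^ h) = n%:R.
Proof.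
move=> pp pc; elim: n => [|n IH]; first by rewrite expr0n expn_eq0 eqn0Ngt (prime_gt0 pp).
by rewrite -natr1 frobD // IH expr1n.
Qed.

Lemma roots_bound (K : fieldType) (n : nat) (rs : seq K) :
  (1 < n)%N -> uniq rs -> (forall x, x \in rs -> x ^+ n = x) -> (size rs <= n)%N.
Proof.
move=> n1 urs hr.
have Pn0 : ('X^n - 'X : {poly K}) != 0.
  rewrite subr_eq0; apply/eqP => /(congr1 (size : {poly K} -> nat)).
  by rewrite size_polyXn size_polyX => -[] hn; rewrite hn in n1.
have := max_poly_roots Pn0 _ urs.
rewrite size_addl ?size_polyXn ?size_opp ?size_polyX //.
apply; apply/allP => x /hr hx.
by rewrite /root !hornerE hx subrr.
Qed.

Lemma img_crit (F : finFieldType) (L : fieldType) (iota : {rmorphism F -> L}) (z : L) :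
  (1 < #|F|)%N -> z ^+ #|F| = z -> exists w, iota w = z.
Proof.
move=> F1 hz; case: (boolP [exists w, iota w == z]) => [/existsP[w /eqP]|]; first by exists w.
rewrite negb_exists => /forallP hn.
have := @roots_bound L #|F| (z :: map iota (enum F)) F1.
rewrite /= size_map -cardE ltnn => H; suff: false by []; apply: H.
  rewrite (map_inj_uniq (fmorph_inj iota)) enum_uniq andbT.
  by apply/mapP => -[w _ hw]; have := hn w; rewrite hw eqxx.
move=> x; rewrite inE => /orP[/eqP -> //|/mapP[w _ ->]].
by rewrite -rmorphXn expf_card.
Qed.

Lemma exists_nonfix (F : finFieldType) (q : nat) :
  (1 < q)%N -> #|F| = (q ^ 2)%N -> exists e : F, e ^+ q != e.
Proof.
move=> q1 hc.
case: (boolP [exists e : F, e ^+ q != e]) => [/existsP[e he]|]; first by exists e.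
rewrite negb_exists => /forallP hn.
have := @roots_bound F q (enum F) q1 (enum_uniq _).
rewrite -cardE hc => H; suff: false by [].
have : (q ^ 2 <= q)%N by apply: H => x _; have := hn x; rewrite negbK => /eqP.
by rewrite leqNgt -{1}(expn1 q) ltn_exp2l // => /negP.
Qed.

Lemma root_q1 (F : finFieldType) (q : nat) (hqD : forall x y : F, (x + y) ^+ q = x ^+ q + y ^+ q)
  (hqN : forall x : F, (- x) ^+ q = - x ^+ q) :
  (1 < q)%N -> #|F| = (q ^ 2)%N -> forall x : F, x ^+ (q + 1) = 1 ->
  exists z : F, z != 0 /\ z ^+ q = x * z.
Proof.
move=> q1 hc.
have fq2 : forall z : F, (z ^+ q) ^+ q = z.
  move=> z; rewrite -exprM.
  have -> : (q * q = #|F|)%N by rewrite hc expnS expn1.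
  by rewrite expf_card.
move=> x hx.
case: (eqVneq x (-1)) => [->|xn1].
  have [e he] := @exists_nonfix F q q1 hc.
  exists (e - e ^+ q); split; first by rewrite subr_eq0 eq_sym.
  by rewrite hqD hqN fq2 mulN1r opprB.
exists (1 + x ^+ q); split.
  apply: contra xn1; rewrite addrC addr_eq0 => /eqP hq.
  by rewrite -hx exprD expr1 hq mulN1r opprK.
rewrite hqD expr1n fq2 mulrDr mulr1.
by rewrite -exprS -addn1 hx addrC.
Qed.

Lemma fq2_lem (F : finFieldType) (q : nat) : #|F| = (q ^ 2)%N -> forall z : F, (z ^+ q) ^+ q = z.
Proof.
move=> hc z; rewrite -exprM.
have -> : (q * q = #|F|)%N by rewrite hc expnS expn1.
by rewrite expf_card.
Qed.

Lemma pp_mu (F : finFieldType) (q : nat) (a b : F)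
  (hqD : forall x y : F, (x + y) ^+ q = x ^+ q + y ^+ q)
  (hqN : forall x : F, (- x) ^+ q = - x ^+ q)
  (q1 : (1 < q)%N) (hc : #|F| = (q ^ 2)%N) (hperm : is_perm_poly (fab q a b))
  (x y : F) (hx : x ^+ (q + 1) = 1) (hy : y ^+ (q + 1) = 1) (hxy : x != y) :
  (Nab q a b).[x] * (Dab a b).[y] != (Nab q a b).[y] * (Dab a b).[x].
Proof.
have fq2 := @fq2_lem F q hc.
set f := fun z => (fab q a b).[z].
have inj : injective f by case: hperm => g g1 _; exact: can_inj g1.
have fE : forall z, f z = z * (1 + a * z ^+ (q * (q - 1)) + b * z ^+ (2 * (q - 1))).
  by move=> z; rewrite /f /fab !(hornerD, hornerZ, hornerXn, hornerC, hornerX, hornerM, hornerMX, hornerE).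
pose H t := 1 + a * t ^+ q + b * t ^+ 2.
have qS : forall z : F, z ^+ q = z ^+ (q - 1) * z.
  by move=> z; rewrite -exprSr subn1 prednK // ltnW.
have fz : forall z t, z != 0 -> z ^+ q = t * z -> f z = z * H t /\ z ^+ (q - 1) = t.
  move=> z t z0 hz.
  have zt : z ^+ (q - 1) = t by apply: (mulIf z0); rewrite -qS.
  split=> //; rewrite fE /H mulnC exprM zt [(2 * _)%N]mulnC exprM zt.
  done.
have HN : forall t, t ^+ (q + 1) = 1 -> t ^+ 2 * (H t) ^+ q = (Nab q a b).[t].
  move=> t ht; have tq : t ^+ q * t = 1 by rewrite -exprSr -addn1.
  rewrite /H /Nab !hqD expr1n !exprMn fq2.
  rewrite !(hornerD, hornerZ, hornerXn, hornerC, hornerX).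
  transitivity (t ^+ 2 + a ^+ q * t ^+ 3 + b ^+ q * (t ^+ q * t) ^+ 2); first by ring.
  by rewrite tq; ring.
have HD : forall t, t ^+ (q + 1) = 1 -> t * H t = (Dab a b).[t].
  move=> t ht; have tq : t ^+ q * t = 1 by rewrite -exprSr -addn1.
  rewrite /H /Dab !(hornerD, hornerZ, hornerXn, hornerC, hornerX).
  transitivity (t + a * (t ^+ q * t) + b * t ^+ 3); first by ring.
  by rewrite tq; ring.
move: (@root_q1 F q hqD hqN q1 hc x hx) (@root_q1 F q hqD hqN q1 hc y hy) => [z1 [z10 hz1]] [z2 [z20 hz2]].
have [f1 _] := fz _ _ z10 hz1.
have [f2 _] := fz _ _ z20 hz2.
have f0 : f 0 = 0 by rewrite fE mul0r.
have fn0 : forall z, z != 0 -> f z != 0.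
  by move=> z; apply: contra => /eqP h; apply/eqP; apply: inj; rewrite h f0.
have x0 : x != 0 by apply/eqP => e; move: hx; rewrite e expr0n addn1 => /esym/eqP; rewrite oner_eq0.
have y0 : y != 0 by apply/eqP => e; move: hy; rewrite e expr0n addn1 => /esym/eqP; rewrite oner_eq0.
apply/negP => /eqP E.
have key : f z1 ^+ q * f z2 = f z1 * f z2 ^+ q.
  apply: (mulIf (mulf_neq0 x0 y0)).
  rewrite f1 f2 !exprMn hz1 hz2.
  transitivity (z1 * z2 * ((x ^+ 2 * H x ^+ q) * (y * H y))); first by ring.
  transitivity (z1 * z2 * ((x * H x) * (y ^+ 2 * H y ^+ q))); last by ring.
  by rewrite HN // HD // HN // HD // E; ring.
pose c := f z1 / f z2.
have cq : c ^+ q = c.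
  rewrite /c exprMn exprVn; apply/eqP.
  rewrite eqr_div ?expf_neq0 ?fn0 //; apply/eqP.
  by rewrite key mulrC.
have c0 : c != 0 by rewrite /c mulf_neq0 ?invr_eq0 ?fn0.
have cq1 : c ^+ (q - 1) = 1 by apply: (mulIf c0); rewrite -qS cq mul1r.
have fc : f (c * z2) = f z1.
  have cA : c ^+ (q * (q - 1)) = 1 by rewrite mulnC exprM cq1 expr1n.
  have cB : c ^+ (2 * (q - 1)) = 1 by rewrite mulnC exprM cq1 expr1n.
  rewrite [LHS]fE (exprMn _ c z2) (exprMn _ c z2) cA cB !mul1r.
  rewrite -mulrA -fE /c divfK ?fn0 //.
have e1 := inj _ _ fc.
move/negP: hxy; apply; apply/eqP.
apply: (mulIf z10).
by rewrite -hz1 -e1 exprMn cq hz2 mulrCA.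
Qed.

Lemma pp_L (F : finFieldType) (L : fieldType) (iota : {rmorphism F -> L}) (q : nat) (a b : F)
  (hqD : forall x y : F, (x + y) ^+ q = x ^+ q + y ^+ q)
  (hqN : forall x : F, (- x) ^+ q = - x ^+ q)
  (q1 : (1 < q)%N) (hc : #|F| = (q ^ 2)%N) (hperm : is_perm_poly (fab q a b)) :
  forall x y : L, x ^+ (q + 1) = 1 -> y ^+ (q + 1) = 1 -> x != y ->
  ((iota a) ^+ q * x ^+ 3 + x ^+ 2 + (iota b) ^+ q) * (iota b * y ^+ 3 + y + iota a) !=
  ((iota a) ^+ q * y ^+ 3 + y ^+ 2 + (iota b) ^+ q) * (iota b * x ^+ 3 + x + iota a).
Proof.
have F1 : (1 < #|F|)%N by rewrite hc; nia.
have back : forall x : L, x ^+ (q + 1) = 1 -> exists x0, iota x0 = x /\ x0 ^+ (q + 1) = 1.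
  move=> x hx.
  have tq : x ^+ q * x = 1 by rewrite -exprSr -addn1.
  have x0 : x != 0 by apply/eqP => e; move: tq; rewrite e mulr0 => /eqP; rewrite eq_sym oner_eq0.
  have xq : x ^+ q = x^-1 by rewrite -[LHS]mulr1 -(mulfV x0) mulrA tq mul1r.
  have [w hw] : exists w, iota w = x.
    apply: img_crit F1 _.
    by rewrite hc expnS expn1 exprM xq exprVn xq invrK.
  exists w; split=> //; apply: (fmorph_inj iota).
  by rewrite rmorphXn rmorph1 hw.
move=> x y hx hy hxy.
have [x0 [ex hx0]] := back x hx.
have [y0 [ey hy0]] := back y hy.
have hxy0 : x0 != y0 by apply: contra hxy => /eqP e; rewrite -ex -ey e.
have := @pp_mu F q a b hqD hqN q1 hc hperm x0 y0 hx0 hy0 hxy0.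
rewrite -(inj_eq (fmorph_inj iota)) /Nab /Dab !(hornerD, hornerZ, hornerXn, hornerC, hornerX).
by rewrite !rmorphM !rmorphD !rmorphM !rmorphXn ex ey.
Qed.


Definition Gp (L : fieldType) (al be a b : L) : {poly {poly L}} :=
  let X := bivX 'X in let Y := bivY 'X in let k c := (c%:P)%:P in
  k al * X * Y * (X + Y) + k (al * a - be * b) * (X ^+ 2 + X * Y + Y ^+ 2)
  - k b * X ^+ 2 * Y ^+ 2 + X * Y + k a * (X + Y) - k be.

Arguments Gp {L}.

Lemma Fbiv_explicit (L : fieldType) (al be a b : L) :
  Fbiv (al *: 'X^3 + 'X^2 + be%:P) (b *: 'X^3 + 'X + a%:P) = Gp al be a b.
Proof.
rewrite /Fbiv /Gp.
set Q := (bivX (K:=L) 'X - bivY 'X).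
have uQ : lead_coef Q \in GRing.unit.
  rewrite /Q /bivX /bivY map_polyX -opprB lead_coefN lead_coefXsubC.
  by rewrite unitrN unitr1.
have E : bivX (al *: 'X^3 + 'X^2 + be%:P) * bivY (b *: 'X^3 + 'X + a%:P)
   - bivY (al *: 'X^3 + 'X^2 + be%:P) * bivX (b *: 'X^3 + 'X + a%:P) = Gp al be a b * Q.
  rewrite /Q /Gp /bivX /bivY -!mul_polyC !rmorphD !rmorphM.
rewrite /= !map_polyC !map_polyX /=.
ring.
by rewrite E Pdiv.IdomainUnit.mulpK.
Qed.

Lemma ev_eq (L : fieldType) (al be a b A B C : L) :
  Gp al be a b = - (b%:P)%:P *
       (bivX 'X * bivY 'X + bivX (A *: 'X) + bivY (B *: 'X) + (C%:P)%:P) *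
       (bivX 'X * bivY 'X + bivX (B *: 'X) + bivY (A *: 'X) + (C%:P)%:P) ->
  forall x y : L, al*x*y*(x+y) + (al*a - be*b)*(x^+2 + x*y + y^+2) - b*x^+2*y^+2
     + x*y + a*(x+y) - be = - b * (x*y + A*x + B*y + C) * (x*y + B*x + A*y + C).
Proof.
move=> E x y.
have := congr1 (fun T : {poly {poly L}} => (T.[y%:P]).[x]) E.
rewrite /Gp /bivX /bivY /= !map_polyZ !map_polyX /= !hornerE /=.
by [].
Qed.


Definition Gf (L : fieldType) (al be a b x y : L) :=
  al*x*y*(x+y) + (al*a - be*b)*(x^+2 + x*y + y^+2) - b*x^+2*y^+2
     + x*y + a*(x+y) - be.
Definition Rf (L : fieldType) (b A B C x y : L) :=
  - b * (x*y + A*x + B*y + C) * (x*y + B*x + A*y + C).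

Arguments Gf {L}.
Arguments Rf {L}.

Lemma lin2 (L : fieldType) (l r d : L) : (2%:R : L) != 0 -> 2%:R * (l - r) = d -> d = 0 -> l = r.
Proof.
move=> h2 e d0; apply/eqP; rewrite -subr_eq0; apply/eqP.
by apply: (mulfI h2); rewrite e d0 mulr0.
Qed.

Lemma coeffs (L : fieldType) (al be a b A B C : L) : (2%:R : L) != 0 ->
  (forall x y, Gf al be a b x y = Rf b A B C x y) ->
  [/\ al = - b * (A + B), al * a - be * b = - b * (A * B),
      1 = - 2%:R * b * C - b * (A + B) ^+ 2 + 3%:R * b * (A * B),
      a = - b * (A + B) * C & be = b * C ^+ 2].
Proof.
move=> h2 hG.
pose D x y := Gf al be a b x y - Rf b A B C x y.
have hD : forall x y, D x y = 0 by move=> x y; rewrite /D hG subrr.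
split.
- apply: (@lin2 L _ _ (D 1 1 + D 1 (-1) - 3%:R * D 1 0 - D (-1) 0 + 2%:R * D 0 0) h2).
    by rewrite /D /Gf /Rf; ring.
  by rewrite !hD; ring.
- apply: (@lin2 L _ _ (D 1 0 + D (-1) 0 - 2%:R * D 0 0) h2).
    by rewrite /D /Gf /Rf; ring.
  by rewrite !hD; ring.
- apply: (@lin2 L _ _ (D 1 0 + D (-1) 0 - 2%:R * D 1 (-1)) h2).
    by rewrite /D /Gf /Rf; ring.
  by rewrite !hD; ring.
- apply: (@lin2 L _ _ (D 1 0 - D (-1) 0) h2).
    by rewrite /D /Gf /Rf; ring.
  by rewrite !hD; ring.
- apply: (@lin2 L _ _ (- 2%:R * D 0 0) h2).
    by rewrite /D /Gf /Rf; ring.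
  by rewrite !hD; ring.
Qed.

Lemma dich (L : fieldType) (al be a b A B C : L) :
  al = - b * (A + B) -> al * a - be * b = - b * (A * B) ->
  1 = - 2%:R * b * C - b * (A + B) ^+ 2 + 3%:R * b * (A * B) ->
  a = - b * (A + B) * C -> be = b * C ^+ 2 ->
  (3%:R * (b * C) + 1) * (b * (A + B) ^+ 2 - b * C + 1) = 0.
Proof.
move=> E1 E2 E3 E4 E5.
move: E2; rewrite E1 E4 E5 => E2.
have d2 : - b * (A + B) * (- b * (A + B) * C) - b * C ^+ 2 * b - - b * (A * B) = 0.
  by rewrite E2 subrr.
have d3 : (- 2%:R * b * C - b * (A + B) ^+ 2 + 3%:R * b * (A * B)) - 1 = 0.
  by rewrite -E3 subrr.
transitivity (3%:R * (- b * (A + B) * (- b * (A + B) * C) - b * C ^+ 2 * b - - b * (A * B))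
   - ((- 2%:R * b * C - b * (A + B) ^+ 2 + 3%:R * b * (A * B)) - 1)); first by ring.
by rewrite d2 d3; ring.
Qed.

Lemma caseII (L : fieldType) (al be a b A B C : L) : b != 0 ->
  al = - b * (A + B) -> al * a - be * b = - b * (A * B) ->
  1 = - 2%:R * b * C - b * (A + B) ^+ 2 + 3%:R * b * (A * B) ->
  a = - b * (A + B) * C -> be = b * C ^+ 2 ->
  b * (A + B) ^+ 2 - b * C + 1 = 0 ->
  b * (- B) ^+ 3 + (- B) + a = 0 /\ al * (- B) ^+ 3 + (- B) ^+ 2 + be = 0.
Proof.
move=> b0 E1 E2 E3 E4 E5 hc.
move: E2; rewrite E1 E4 E5 => E2.
have hC : A * B = C.
  have : b * (b * (A + B) ^+ 2 * C - b * C ^+ 2 + A * B) = 0.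
    transitivity (- b * (A + B) * (- b * (A + B) * C) - b * C ^+ 2 * b - - b * (A * B)); first by ring.
    by rewrite E2 subrr.
  move/eqP; rewrite mulf_eq0 (negbTE b0) /= => /eqP h.
  have -> : A * B = (b * (A + B) ^+ 2 * C - b * C ^+ 2 + A * B) - C * (b * (A + B) ^+ 2 - b * C + 1) + C by ring.
  by rewrite h hc; ring.
have d3 : 1 - (- 2%:R * b * C - b * (A + B) ^+ 2 + 3%:R * b * (A * B)) = 0.
  by rewrite {1}E3 subrr.
rewrite -hC in d3 E4 E5 *.
split.

  transitivity (- B * (1 - (- 2%:R * b * (A * B) - b * (A + B) ^+ 2 + 3%:R * b * (A * B)))); first by ring.
  by rewrite d3 mulr0.

transitivity (B ^+ 2 * (1 - (- 2%:R * b * (A * B) - b * (A + B) ^+ 2 + 3%:R * b * (A * B)))); first by ring.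
by rewrite d3 mulr0.
Qed.

Lemma caseI (L : fieldType) (al be a b A B C : L) :
  (3%:R : L) != 0 -> a != 0 -> al != 0 ->
  al = - b * (A + B) -> al * a - be * b = - b * (A * B) ->
  a = - b * (A + B) * C -> be = b * C ^+ 2 ->
  3%:R * (b * C) + 1 = 0 ->
  [/\ b = - al / (3%:R * a), A + B = 3%:R * a,
      A * B = 3%:R * a ^+ 2 - a / (3%:R * al) & C = a / al].
Proof.
move=> h3 a0 al0 E1 E2 E4 E5 w3.
have hC0 : a = al * C by rewrite E4 E1; ring.
have hCa : C = a / al by rewrite hC0 mulrAC mulfV // mul1r.
have a30 : 3%:R * a != 0 by rewrite mulf_neq0.
have hb3 : b * (3%:R * a) = - al.
  rewrite hC0; transitivity (al * (3%:R * (b * C) + 1) - al); first by ring.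
  by rewrite w3; ring.
have hb : b = - al / (3%:R * a) by rewrite -hb3 mulfK.
have b0 : b != 0 by apply: contraNneq al0 => b0; move: hb3; rewrite b0 mul0r => /eqP; rewrite eq_sym oppr_eq0.
split => //.
- by apply: (mulfI b0); rewrite hb3 E1; ring.
- move: E2; rewrite E5 hb hCa => E2.
  have -> : A * B = (3%:R * a / al) * (- (- al / (3%:R * a)) * (A * B)) by field; rewrite ?a0 ?al0 ?h3.
  rewrite -E2; field.
  by rewrite a0 al0 h3.
Qed.

Lemma moeb (L : fieldType) (q : nat) (al be a b A B C x : L)
  (hqD : forall x y : L, (x + y) ^+ q = x ^+ q + y ^+ q)
  (hqN : forall x : L, (- x) ^+ q = - x ^+ q)
  (PPL : forall x y : L, x ^+ (q + 1) = 1 -> y ^+ (q + 1) = 1 -> x != y ->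
     (al * x ^+ 3 + x ^+ 2 + be) * (b * y ^+ 3 + y + a) !=
     (al * y ^+ 3 + y ^+ 2 + be) * (b * x ^+ 3 + x + a))
  (hev : forall x y, Gf al be a b x y = Rf b A B C x y) :
  C != 0 -> A ^+ q = B / C -> B ^+ q = A / C -> C ^+ q = C^-1 ->
  x ^+ (q + 1) = 1 -> x + B != 0 -> A * x + C != 0 -> x ^+ 2 + (A + B) * x + C != 0 -> False.
Proof.
move=> C0 hAq hBq hCq hx xB0 AC0 fix0.
have tq : x ^+ q * x = 1 by rewrite -exprSr -addn1.
have x0 : x != 0 by apply/eqP => e; move: tq; rewrite e mulr0 => /eqP; rewrite eq_sym oner_eq0.
have xq : x ^+ q = x^-1 by rewrite -[LHS]mulr1 -(mulfV x0) mulrA tq mul1r.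
pose y := - (A * x + C) / (x + B).
have yq : y ^+ q = - (A ^+ q * x ^+ q + C ^+ q) / (x ^+ q + B ^+ q).
  by rewrite /y mulNr hqN exprMn exprVn !hqD !exprMn mulNr.
have hy : y ^+ (q + 1) = 1.
  rewrite exprD expr1 yq hAq hBq hCq xq /y.
  field.
  by rewrite xB0 C0 x0 addrC AC0.
have hxy : x != y.
  apply: contra fix0 => /eqP e.
  have : x * (x + B) = - (A * x + C) by rewrite {1}e /y divfK.
  move=> h; apply/eqP; transitivity (x * (x + B) + (A * x + C)); first by ring.
  by rewrite h addNr.
have := PPL x y hx hy hxy.
have hz : x * y + A * x + B * y + C = 0.
  have : y * (x + B) = - (A * x + C) by rewrite /y divfK.
  move=> h; transitivity (y * (x + B) + (A * x + C)); first by ring.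
  by rewrite h addNr.
suff -> : (al * x ^+ 3 + x ^+ 2 + be) * (b * y ^+ 3 + y + a) =
     (al * y ^+ 3 + y ^+ 2 + be) * (b * x ^+ 3 + x + a) by rewrite eqxx.
apply/eqP; rewrite -subr_eq0; apply/eqP.
transitivity ((x - y) * Gf al be a b x y); first by rewrite /Gf; ring.
by rewrite hev /Rf hz; ring.
Qed.

Lemma rq_roots (L : fieldType) (q : nat) (a al A B : L)
  (hqD : forall x y : L, (x + y) ^+ q = x ^+ q + y ^+ q)
  (hqN : forall x : L, (- x) ^+ q = - x ^+ q)
  (h3q : (3%:R : L) ^+ q = 3%:R) (q0 : (0 < q)%N) :
  (3%:R : L) != 0 -> a != 0 -> al != 0 -> a ^+ q = al -> al ^+ q = a ->
  A + B = 3%:R * a -> A * B = 3%:R * a ^+ 2 - a / (3%:R * al) ->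
  (A / a) ^+ q = A / a \/ (A / a) ^+ q = B / a.
Proof.
move=> h3 a0 al0 haq halq hs hp.
have hB : B = 3%:R * a - A by rewrite -hs; ring.
set r := A / a.
pose k := 3%:R - (3%:R * (al * a))^-1.
have hk : r * (3%:R - r) = k.
  have -> : r * (3%:R - r) = (A * B) / a ^+ 2 by rewrite /r hB; field.
  by rewrite hp /k; field; rewrite h3 a0 al0.
have kq : k ^+ q = k.
  by rewrite /k hqD hqN exprVn !exprMn h3q haq halq [al * a]mulrC.
have h0 : (r ^+ 2 - 3%:R * r + k) ^+ q = 0.
  have -> : r ^+ 2 - 3%:R * r + k = 0 by rewrite -hk; ring.
  by rewrite expr0n eqn0Ngt q0.
have hz : forall z : L, (z ^+ 2 - 3%:R * z + k) ^+ q = (z ^+ q) ^+ 2 - 3%:R * z ^+ q + k.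
  by move=> z; rewrite hqD hqD hqN (exprMn _ (3%:R : L) z) h3q kq -exprM mulnC exprM.
rewrite hz in h0.
have : (r ^+ q - r) * (r ^+ q - B / a) = 0.
  have -> : B / a = 3%:R - r by rewrite hB /r; field.
  by rewrite -h0 -hk; ring.
move/eqP; rewrite mulf_eq0 !subr_eq0 => /orP[/eqP ->|/eqP ->]; by [left|right].
Qed.


Lemma avoid (L : fieldType) (xs : seq L) (A B C : L) :
  uniq xs -> size xs = 5%N -> C != 0 ->
  exists2 x, x \in xs & [/\ x + B != 0, A * x + C != 0 & x ^+ 2 + (A + B) * x + C != 0].
Proof.
move=> uxs sxs C0.
pose p1 : {poly L} := 'X + B%:P.
pose p2 : {poly L} := A *: 'X + C%:P.
pose p3 : {poly L} := 'X^2 + ((A + B) *: 'X + C%:P).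
have p10 : p1 != 0 by rewrite -size_poly_eq0 /p1 size_XaddC.
have p20 : p2 != 0.
  apply/eqP => h; have := congr1 (horner^~ 0) h; rewrite /p2 !hornerE.
  by move=> e; move: C0; rewrite e eqxx.
have p30 : p3 != 0.
  apply/eqP => h; have := congr1 (horner^~ 0) h; rewrite /p3 !(hornerD, hornerXn, hornerZ, hornerX, hornerC) expr0n mulr0 !add0r.
  by move=> e; move: C0; rewrite e eqxx.
have s2 : (size p2 <= 2)%N.
  apply: leq_trans (size_polyD _ _) _; rewrite geq_max.
  by rewrite (leq_trans (size_scale_leq _ _)) ?size_polyX // (leq_trans (size_polyC_leq1 _)).
have s3 : size p3 = 3%N.
  rewrite /p3 size_addl size_polyXn //.
  apply: leq_ltn_trans (size_polyD _ _) _; rewrite gtn_max.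
  by rewrite (leq_ltn_trans (size_scale_leq _ _)) ?size_polyX // (leq_ltn_trans (size_polyC_leq1 _)).
pose P := p1 * p2 * p3.
have P0 : P != 0 by rewrite /P !mulf_neq0.
have sP : (size P <= 5)%N.
  rewrite /P size_mul ?mulf_neq0 // size_mul // s3 /p1 size_XaddC.
  by case: (size p2) s2 => [|[|[|]]].
case: (boolP (all (root P) xs)) => [hall|].
  by have := max_poly_roots P0 hall uxs; rewrite sxs ltnNge sP.
case/allPn => x xin hx; exists x => //.
move: hx; rewrite /root /P !hornerM !mulf_eq0 !negb_or => /andP[/andP[h1 h2] h3].
split.
- by move: h1; rewrite /p1 !hornerE.
- by move: h2; rewrite /p2 !hornerE.
- by move: h3; rewrite /p3 !hornerE.
Qed.

Lemma mu5 (F : finFieldType) (p q : nat) (e : F)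
  (hqD : forall x y : F, (x + y) ^+ q = x ^+ q + y ^+ q)
  (hqN : forall x : F, (- x) ^+ q = - x ^+ q)
  (hnat : forall n, (n%:R : F) ^+ q = n%:R)
  (fq2 : forall z : F, (z ^+ q) ^+ q = z)
  (p4 : (4 < p)%N) (pc : p \in [pchar F]) (he : e ^+ q != e) :
  exists xs : seq F, [/\ uniq xs, size xs = 5%N & forall x, x \in xs -> x ^+ (q + 1) = 1].
Proof.
have n0 : forall i : nat, i%:R + e != 0.
  move=> i; apply: contra he => /eqP h.
  have -> : e = (i%:R + e) - i%:R by ring.
  rewrite h add0r.
  by rewrite hqN hnat.
have n1 : forall i : nat, i%:R + e ^+ q != 0.
  by move=> i; rewrite -(hnat i) -hqD expf_neq0.
pose f (i : nat) := (i%:R + e ^+ q) / (i%:R + e).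
exists (map f (iota 0 5)); split.
- rewrite map_inj_in_uniq ?iota_uniq // => i j; rewrite !mem_iota !add0n => hi hj hij.
  have : (i%:R - j%:R) * (e - e ^+ q) = 0 :> F.
    have := hij; rewrite /f => /eqP; rewrite eqr_div ?n0 // => /eqP h.
    transitivity ((i%:R + e ^+ q) * (j%:R + e) - (j%:R + e ^+ q) * (i%:R + e)); first by ring.
    by rewrite h subrr.
  move/eqP; rewrite mulf_eq0 !subr_eq0 (negbTE (_ : e != e ^+ q)); last by rewrite eq_sym.
  rewrite orbF => /eqP hn.
  wlog lij : i j hi hj hij hn / (j <= i)%N.
    by move=> H; case: (leqP j i) => [|/ltnW] l; [apply: H | apply/esym; apply: H].
  have : (p %| i - j)%N by rewrite (dvdn_pcharf pc) natrB // hn subrr.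
  case: (eqVneq i j) => // nij.
  have h0 : (0 < i - j)%N by rewrite subn_gt0 ltn_neqAle eq_sym nij lij.
  move/(dvdn_leq h0) => pl.
  have : (i - j < 5)%N by apply: leq_ltn_trans (leq_subr _ _) hi.
  by move=> h; move: (leq_ltn_trans pl h); rewrite ltnS leqNgt p4.
- by rewrite size_map size_iota.
- move=> x /mapP[i _ ->].
  rewrite exprD expr1 /f exprMn exprVn !hqD hnat fq2.
  by field; rewrite n0 n1.
Qed.

Theorem mainTheorem10
  (F : finFieldType) (p h q : nat) (hp : prime p) (hp3 : (3 < p)%N)
  (hq : q = (p ^ h)%N) (hchar : p \in [pchar F]) (hcard : #|F| = (q ^ 2)%N)
  (a b : F) (ha : a != 0) (hb : b != 0)
  (hperm : is_perm_poly (fab q a b))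
  (hcop : coprimep (Nab q a b) (Dab a b))
  (L : closedFieldType) (iota : {rmorphism F -> L})
  (hfact : exists A B C : L,
     Fbiv (map_poly iota (Nab q a b)) (map_poly iota (Dab a b)) =
     - (iota b)%:P%:P *
       (bivX 'X * bivY 'X + bivX (A *: 'X) + bivY (B *: 'X) + C%:P%:P) *
       (bivX 'X * bivY 'X + bivX (B *: 'X) + bivY (A *: 'X) + C%:P%:P)) :
  b = - a ^+ (q - 1) / 3%:R /\
  nonzero_square_Fq q (3%:R * a ^+ (q + 1) * (4%:R - 9%:R * a ^+ (q + 1))).
Proof.
have F1 : (1 < #|F|)%N by apply/card_gt1P; exists 0, 1; rewrite !inE eq_sym oner_eq0.
have q1 : (1 < q)%N by move: F1; rewrite hcard; nia.
have q0 : (0 < q)%N by apply: ltnW.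
have p4 : (4 < p)%N.
  rewrite ltn_neqAle hp3 andbT; apply/eqP => e; move: hp; rewrite -e.
  by [].
have pcL : p \in [pchar L] := rmorph_pchar iota hchar.
have hqDF : forall x y : F, (x + y) ^+ q = x ^+ q + y ^+ q by move=> x y; rewrite hq frobD.
have hqNF : forall x : F, (- x) ^+ q = - x ^+ q by move=> x; rewrite hq frobN.
have hnatF : forall n, (n%:R : F) ^+ q = n%:R by move=> n; rewrite hq frobnat.
have hqDL : forall x y : L, (x + y) ^+ q = x ^+ q + y ^+ q by move=> x y; rewrite hq frobD.
have hqNL : forall x : L, (- x) ^+ q = - x ^+ q by move=> x; rewrite hq frobN.
have hnatL : forall n, (n%:R : L) ^+ q = n%:R by move=> n; rewrite hq frobnat.
have fq2 := @fq2_lem F q hcard.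
have h2L : (2%:R : L) != 0.
  by rewrite -(dvdn_pcharf pcL); apply/negP => /dvdn_leq => /(_ isT); lia.
have h3L : (3%:R : L) != 0.
  by rewrite -(dvdn_pcharf pcL); apply/negP => /dvdn_leq => /(_ isT); lia.
have mapN : map_poly iota (Nab q a b) = (iota a) ^+ q *: 'X^3 + 'X^2 + ((iota b) ^+ q)%:P.
  rewrite /Nab !rmorphD /= map_polyZ !map_polyXn map_polyC.
by rewrite (rmorphXn iota q a) -(rmorphXn iota q b).
have mapD : map_poly iota (Dab a b) = iota b *: 'X^3 + 'X + (iota a)%:P.
  by rewrite /Dab !rmorphD /= map_polyZ map_polyXn map_polyC map_polyX.
case: hfact => A [B [C hf]].
rewrite mapN mapD Fbiv_explicit in hf.
have hev : forall x y, Gf ((iota a) ^+ q) ((iota b) ^+ q) (iota a) (iota b) x y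
                    = Rf (iota b) A B C x y := fun x y => @ev_eq L _ _ _ _ _ _ _ hf x y.
have [E1 E2 E3 E4 E5] := @coeffs L _ _ _ _ _ _ _ h2L hev.
have a0 : iota a != 0 by rewrite fmorph_eq0.
have b0 : iota b != 0 by rewrite fmorph_eq0.
have al0 : (iota a) ^+ q != 0 by rewrite expf_neq0.
have hd := @dich L _ _ _ _ _ _ _ E1 E2 E3 E4 E5.
case: (eqVneq (3%:R * (iota b * C) + 1) 0) => w3; last first.
  move/eqP: hd; rewrite mulf_eq0 (negbTE w3) /= => /eqP hc2.
  have [hD hN] := @caseII L _ _ _ _ _ _ _ b0 E1 E2 E3 E4 E5 hc2.
  have := hcop; rewrite -(coprimep_map iota) mapN mapD => hco.
  have := coprimep_root (x := - B) hco.
  rewrite /root !(hornerD, hornerZ, hornerXn, hornerC, hornerX) hN hD eqxx.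
  by move=> /(_ isT).
have [hb' hs hp' hC] := @caseI L _ _ _ _ _ _ _ h3L a0 al0 E1 E2 E4 E5 w3.
have halq : ((iota a) ^+ q) ^+ q = iota a.
  by rewrite -(rmorphXn iota q a) -(rmorphXn iota q (a ^+ q)) fq2.
split.
  apply: (fmorph_inj iota).
  rewrite fmorph_div rmorphN (rmorphXn iota) rmorph_nat hb'.
  have -> : (iota a) ^+ q = (iota a) ^+ (q - 1) * iota a by rewrite -exprSr subn1 prednK.
  by field; rewrite h3L a0.
have hrq := @rq_roots L q (iota a) ((iota a) ^+ q) A B hqDL hqNL (hnatL 3) q0 h3L a0 al0 erefl halq hs hp'.
have PPL := @pp_L F L iota q a b hqDF hqNF q1 hcard hperm.
case: (eqVneq ((A / iota a) ^+ q) (B / iota a)) => hr.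
  exfalso.
  have C0 : C != 0 by rewrite hC mulf_neq0 ?invr_eq0.
  have hAq : A ^+ q = B / C.
    by rewrite -{1}(divfK a0 A) exprMn hr hC; field; rewrite a0 al0.
  have hBq : B ^+ q = A / C.
    have hB : B = 3%:R * iota a - A by rewrite -hs; ring.
    rewrite {1}hB hqDL hqNL exprMn (hnatL 3) hAq hC.
    rewrite [in RHS](_ : A = 3%:R * iota a - B); last by rewrite -hs; ring.
    by field; rewrite a0 al0.
  have hCq : C ^+ q = C^-1 by rewrite hC exprMn exprVn halq invf_div.
  have [e he] := @exists_nonfix F q q1 hcard.
  have [xs [uxs sxs hxs]] := @mu5 F p q e hqDF hqNF hnatF fq2 p4 hchar he.
  have [x xin [xB xA xfix]] : exists2 x, x \in map iota xs &
      [/\ x + B != 0, A * x + C != 0 & x ^+ 2 + (A + B) * x + C != 0].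
    apply: avoid => //; last by rewrite size_map.
    by rewrite (map_inj_uniq (fmorph_inj iota)).
  have hx : x ^+ (q + 1) = 1.
    by case/mapP: xin => x0 x0in ->; rewrite -(rmorphXn iota (q + 1) x0) hxs // rmorph1.
  exact: (@moeb L q _ _ _ _ A B C x hqDL hqNL PPL hev C0 hAq hBq hCq hx xB xA xfix).
have hrr : (A / iota a) ^+ q = A / iota a.
  by case: hrq => // e; rewrite e eqxx in hr.
have rB : (B / iota a) ^+ q = B / iota a.
  have -> : B / iota a = 3%:R - A / iota a by rewrite (_ : B = 3%:R * iota a - A); [field | rewrite -hs; ring].
  by rewrite hqDL hqNL (hnatL 3) hrr.
have AB : A / iota a - B / iota a != 0.
  by rewrite subr_eq0; apply: contra hr => /eqP <-; rewrite hrr.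
pose u := (iota a) ^+ q * iota a.
have u0 : u != 0 by rewrite mulf_neq0.
have uq : u ^+ q = u by rewrite /u exprMn halq mulrC.
pose e := 3%:R * u * (A / iota a - B / iota a).
have eq_ : e ^+ q = e by rewrite /e (exprMn _ (3%:R * u)) (exprMn _ 3%:R u) (hnatL 3) uq hqDL hqNL hrr rB.
have e0 : e != 0 by rewrite /e !mulf_neq0.
have [w hw] : exists w, iota w = e.
  apply: img_crit F1 _.
  by rewrite hcard expnS expn1 exprM eq_ eq_.
exists w; split.
- by apply: (fmorph_inj iota); rewrite (rmorphXn iota) hw.
- by rewrite -(fmorph_eq0 iota) hw.
- apply: (fmorph_inj iota).
  rewrite (rmorphXn iota) hw !rmorphM rmorphB !rmorphM !rmorph_nat (rmorphXn iota).
  have -> : (iota a) ^+ (q + 1) = u by rewrite exprD expr1.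
  have -> : e ^+ 2 = 9%:R * u ^+ 2 * (((A + B) ^+ 2 - 4%:R * (A * B)) / (iota a) ^+ 2).
    by rewrite /e; field.
  by rewrite hs hp' /u; field; rewrite a0 al0 h3L.
Qed.
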